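(* Let $p$ be an odd prime, let $q\in\mathbb{C}_p$ with $|1-q|_p<1$, let $h\in\mathbb{Z}$, $r\in\mathbb{N}$, $n\ge 0$, and let $w_1,w_2\in\mathbb{N}$ with $w_1\equiv 1\pmod 2$ and $w_2\equiv 1\pmod 2$. Then, for $x\in\mathbb{Z}_p$, \[ \sum_{i=0}^{n}\binom{n}{i}[w_2]_q^{i}[w_1]_q^{n-i}E_{n-i,q^{w_1}}^{(h,r)}(w_2x)\,T_{n,i,q^{w_2}}^{(h,r)}(w_1) =\sum_{i=0}^{n}\binom{n}{i}[w_1]_q^{i}[w_2]_q^{n-i}E_{n-i,q^{w_2}}^{(h,r)}(w_1x)\,T_{n,i,q^{w_1}}^{(h,r)}(w_2), \] where for $w\in\mathbb{N}$, \[ T_{n,i,q}^{(h,r)}(w)=\sum_{j_1,\dots,j_r=0}^{w-1}(-1)^{\sum_{l=1}^r j_l}\,q^{\sum_{l=1}^r(n+h-l-i)j_l}\,[j_1+\cdots+j_r]_q^i . \]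
   Context: $\mathbb{Z}_p$ denotes the $p$-adic integers and $\mathbb{C}_p$ the completion of the algebraic closure of $\mathbb{Q}_p$. For $q\in\mathbb{C}_p$ with $|1-q|_p<1$, the $q$-number is $[x]_q=\frac{1-q^x}{1-q}$, and $[x]_{q^w}=\frac{1-q^{wx}}{1-q^w}$. For a continuous function $f$ on $\mathbb{Z}_p$, the $p$-adic fermionic integral is $\int_{\mathbb{Z}_p}f(y)\,d\mu_{-1}(y)=\lim_{N\to\infty}\sum_{y=0}^{p^N-1}f(y)(-1)^y$; the multivariate integral over $y_1,\dots,y_r$ is the iterated one. For $h\in\mathbb{Z}$, $r\in\mathbb{N}$, the expansions of $q$-Euler polynomials are defined by \[ E_{n,q}^{(h,r)}(x)=\int_{\mathbb{Z}_p}\!\cdots\!\int_{\mathbb{Z}_p} q^{\sum_{l=1}^r(h-l)y_l}\,[x+y_1+\cdots+y_r]_q^n\,d\mu_{-1}(y_1)\cdots d\mu_{-1}(y_r), \] equivalently by the generating function $\sum_{n\ge0}E_{n,q}^{(h,r)}(x)\frac{t^n}{n!}=2^r\sum_{m_1,\dots,m_r=0}^{\infty}q^{\sum_{l=1}^r(h-l)m_l}(-1)^{\sum_{l=1}^r m_l}e^{[x+m_1+\cdots+m_r]_q t}$; $E_{n,q^w}^{(h,r)}$ denotes the same with $q$ replaced by $q^w$. *)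

(* Defs.v *)
(* C_p is modelled abstractly (no p-adic library is available),
   as an algebraically closed field K with an absolute value |.| : K -> R
   which is non-archimedean, complete, and restricts to |.|_p on the integers. *)
From HB Require Import structures.
From mathcomp Require Import all_boot all_order all_algebra.
From mathcomp Require Import boolp classical_sets reals.
Set Implicit Arguments. Unset Strict Implicit. Unset Printing Implicit Defensive.
Import Order.TTheory GRing.Theory Num.Theory.
Local Open Scope ring_scope.

Section Padic.
Variables (R : realType) (K : closedFieldType) (absv : K -> R) (p : nat).

Definition cauchy_seq (u : nat -> K) : Prop :=
  forall e : R, 0 < e -> exists N, forall m k, (N <= m)%N -> (N <= k)%N -> absv (u m - u k) < e.

Definition cvg_to (u : nat -> K) (l : K) : Prop :=
  forall e : R, 0 < e -> exists N, forall m, (N <= m)%N -> absv (u m - l) < e.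

Definition Cp_like : Prop :=
  (forall x, absv x = 0 <-> x = 0) /\
  (forall x, 0 <= absv x) /\
  (forall x y, absv (x * y) = absv x * absv y) /\
  (forall x y, absv (x + y) <= Num.max (absv x) (absv y)) /\
  (forall n : nat, absv (n.+1%:R) = (p%:R ^- logn p n.+1 : R)) /\
  (forall u, cauchy_seq u -> exists l, cvg_to u l).

Definition plim (u : nat -> K) : K := xget 0 (fun l => cvg_to u l).

(* Z_p as coherent sequences of residues: x N in [0, p^N), x (N+1) = x N mod p^N *)
Definition is_Zp (x : nat -> nat) : Prop :=
  forall N, (x N < p ^ N)%N /\ (x N.+1 %% p ^ N = x N)%N.

Definition zp_addn (x : nat -> nat) (m : nat) : nat -> nat :=
  fun N => ((x N + m) %% p ^ N)%N.
Definition zp_muln (w : nat) (x : nat -> nat) : nat -> nat :=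
  fun N => ((w * x N) %% p ^ N)%N.

Definition qpowZp (q : K) (x : nat -> nat) : K := plim (fun N => q ^+ x N).

Definition qnumZp (q : K) (x : nat -> nat) : K := (1 - qpowZp q x) / (1 - q).
Definition qnum (q : K) (m : nat) : K := (1 - q ^+ m) / (1 - q).

(* p-adic fermionic integral of f (only the values at y in N are used) *)
Definition fint (f : nat -> K) : K :=
  plim (fun N => \sum_(0 <= y < p ^ N) f y * (-1) ^+ y).

(* iterated integral over y_1, ..., y_r; F receives [:: y_1; ...; y_r] *)
Fixpoint mint (r : nat) (F : seq nat -> K) : K :=
  match r with
  | 0 => F [::]
  | r'.+1 => fint (fun y => mint r' (fun ys => F (y :: ys)))
  end.

Definition Eqhr (n : nat) (q : K) (h : int) (r : nat) (x : nat -> nat) : K :=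
  mint r (fun ys =>
    q ^ (\sum_(l < r) (h - (l.+1)%:Z) * (nth 0%N ys l)%:Z)
      * qnumZp q (zp_addn x (\sum_(l < r) nth 0%N ys l)) ^+ n).

Definition Tqhr (n i : nat) (q : K) (h : int) (r w : nat) : K :=
  \sum_(j : {ffun 'I_r -> 'I_w})
     (-1) ^+ (\sum_(l < r) (j l : nat)) *
     q ^ (\sum_(l < r) (n%:Z + h - (l.+1)%:Z - i%:Z) * (j l : nat)%:Z) *
     qnum q (\sum_(l < r) (j l : nat)) ^+ i.

End Padic.

(* Main.v *)
Require Import Defs.
From HB Require Import structures.
From mathcomp Require Import all_boot all_order all_algebra.
From mathcomp Require Import boolp classical_sets reals.
From mathcomp Require Import ring lra.
Import Order.TTheory GRing.Theory Num.Theory.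
Local Open Scope ring_scope.

Section Analysis.
Variables (R : realType) (K : closedFieldType) (absv : K -> R) (p : nat).
Hypotheses (Hp : prime p) (Hpodd : odd p) (HK : Cp_like absv p).

Lemma av0 x : absv x = 0 <-> x = 0. Proof. by case: HK. Qed.
Lemma avge0 x : 0 <= absv x. Proof. by case: HK => _ []. Qed.
Lemma avM x y : absv (x * y) = absv x * absv y. Proof. by case: HK => _ [_ []]. Qed.
Lemma avD x y : absv (x + y) <= Num.max (absv x) (absv y).
Proof. by case: HK => _ [_ [_ []]]. Qed.
Lemma avnat n : absv (n.+1%:R) = (p%:R ^- logn p n.+1 : R).
Proof. by case: HK => _ [_ [_ [_ []]]]. Qed.
Lemma avcomplete u : cauchy_seq absv u -> exists l, cvg_to absv u l.
Proof. by case: HK => _ [_ [_ [_ [_ h]]]]; apply: h. Qed.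

Lemma p_gt1 : (1 < p)%N. Proof. exact: prime_gt1. Qed.

Lemma av1 : absv 1 = 1.
Proof. by have := avnat 0; rewrite logn1 expr0 invr1. Qed.
Lemma avN1 : absv (-1) = 1.
Proof.
have h : absv (-1) * absv (-1) = 1 by rewrite -avM mulrNN mulr1 av1.
have := avge0 (-1); move: h; set a := absv (-1) => h ha.
have : (a - 1) * (a + 1) = 0 by rewrite mulrDr mulrBl !mulr1 mul1r h; ring.
move/eqP; rewrite mulf_eq0 => /orP [|/eqP]; first by rewrite subr_eq0 => /eqP.
move=> e; have e2 : a = -1 by apply/eqP; rewrite -subr_eq0 opprK e.
by move: ha; rewrite e2 ler0N1.
Qed.
Lemma avN x : absv (- x) = absv x.
Proof. by rewrite -mulN1r avM avN1 mul1r. Qed.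
Lemma avB x y : absv (x - y) = absv (y - x).
Proof. by rewrite -avN opprB. Qed.
Lemma av00 : absv 0 = 0. Proof. by apply/av0. Qed.

Lemma avDle x y M : absv x <= M -> absv y <= M -> absv (x + y) <= M.
Proof. by move=> hx hy; apply: le_trans (avD x y) _; rewrite ge_max hx hy. Qed.
Lemma avDlt x y M : absv x < M -> absv y < M -> absv (x + y) < M.
Proof. by move=> hx hy; apply: le_lt_trans (avD x y) _; rewrite gt_max hx hy. Qed.

Lemma avsum (I : Type) (s : seq I) (F : I -> K) M : 0 <= M ->
  (forall i, absv (F i) <= M) -> absv (\sum_(i <- s) F i) <= M.
Proof.
move=> hM hF; elim: s => [|a s IH]; first by rewrite big_nil av00.
by rewrite big_cons; apply: avDle.
Qed.

Lemma avDeq x y : absv x < absv y -> absv (x + y) = absv y.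
Proof.
move=> hxy; apply/eqP; rewrite eq_le; apply/andP; split.
  by apply: avDle => //; apply: ltW.
have e : y = (x + y) + (- x) by ring.
have := avD (x + y) (- x); rewrite -e avN => h.
case: (leP (absv x) (absv (x+y))) => [c|c]; first by move: h; rewrite max_l.
by move: h; rewrite max_r ?(ltW c) // => h; move: hxy; rewrite ltNge h.
Qed.

Lemma pR_gt1 : 1 < (p%:R : R).
Proof. by rewrite ltr1n p_gt1. Qed.
Lemma pR_gt0 : 0 < (p%:R : R).
Proof. by apply: lt_trans pR_gt1. Qed.

Lemma avnat_le1 n : absv (n%:R) <= 1.
Proof.
case: n => [|n]; first by rewrite av00.
rewrite avnat invf_le1 ?exprn_gt0 ?pR_gt0 //.
by apply: exprn_ege1; apply: ltW pR_gt1.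
Qed.

Lemma avnat_dvd n : (0 < n)%N -> (p %| n)%N -> absv (n%:R) <= (p%:R)^-1.
Proof.
case: n => [//|n] _ hd; rewrite avnat.
have hL : (1 <= logn p n.+1)%N by rewrite logn_gt0 mem_primes Hp hd.
rewrite lef_pV2 ?posrE ?exprn_gt0 ?pR_gt0 //.
by rewrite -{1}(expr1 (p%:R : R)) ler_eXn2l // pR_gt1.
Qed.

Lemma av2 : absv (2%:R) = 1.
Proof.
rewrite avnat logn_coprime ?expr0 ?invr1 //.
have p2 : (2 < p)%N.
  by move: p_gt1 Hpodd; case: p => [|[|[|]]].
rewrite prime_coprime //; apply/negP => /(dvdn_leq (isT : (0 < 2)%N)).
by rewrite leqNgt p2.
Qed.

Lemma avunit a : absv (a - 1) < 1 -> absv a = 1.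
Proof.
move=> h; have e : a = (a - 1) + 1 by ring.
by rewrite e avDeq // av1.
Qed.

Lemma avunit_neq0 a : absv (a - 1) < 1 -> a != 0.
Proof. by move=> /avunit h; apply/eqP => e; move: h; rewrite e av00 => /eqP; rewrite eq_sym oner_eq0. Qed.

Lemma avunitD1 a : absv (a - 1) < 1 -> absv (1 + a) = 1.
Proof.
move=> h; have e : 1 + a = (a - 1) + 2%:R by rewrite -natr1; ring.
by rewrite e avDeq av2.
Qed.

Lemma avunitM a b : absv (a - 1) < 1 -> absv (b - 1) < 1 -> absv (a * b - 1) < 1.
Proof.
move=> ha hb; have e : a * b - 1 = a * (b - 1) + (a - 1) by ring.
by rewrite e; apply: avDlt => //; rewrite avM avunit // mul1r.
Qed.

Lemma avexpr_le1 a k : absv a <= 1 -> absv (a ^+ k) <= 1.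
Proof.
move=> ha; elim: k => [|k IH]; first by rewrite expr0 av1.
by rewrite exprS avM; apply: (le_trans (ler_wpM2l (avge0 _) IH)); rewrite mulr1.
Qed.

Lemma avsumpow a n : absv a <= 1 -> absv (\sum_(i < n) a ^+ i) <= 1.
Proof.
move=> ha; apply: avsum => // i; exact: avexpr_le1.
Qed.

Lemma avXn_le a n : absv a <= 1 -> absv (a ^+ n - 1) <= absv (a - 1).
Proof.
move=> ha; rewrite subrX1 avM; apply: ler_piMr; first exact: avge0.
exact: avsumpow.
Qed.

Lemma avunitX a n : absv (a - 1) < 1 -> absv (a ^+ n - 1) < 1.
Proof.
move=> h; have ha : absv a <= 1 by rewrite avunit.
exact: le_lt_trans (avXn_le a n ha) h.
Qed.

Lemma avunitV a : absv (a - 1) < 1 -> absv (a^-1 - 1) < 1.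
Proof.
move=> h; have a0 := avunit_neq0 a h.
have e : a^-1 - 1 = a^-1 * (1 - a) by rewrite mulrBr mulr1 mulVf.
have ha := avunit a h.
have hi : absv a^-1 = 1.
  have : absv a^-1 * absv a = 1 by rewrite -avM mulVf // av1.
  by rewrite ha mulr1.
by rewrite e avM hi mul1r avB.
Qed.

Lemma avX x k : absv (x ^+ k) = absv x ^+ k.
Proof. by elim: k => [|k IH]; rewrite ?expr0 ?av1 // !exprS avM IH. Qed.

Lemma bernoulli (a : R) n : 0 <= a -> 1 + n%:R * a <= (1 + a) ^+ n.
Proof.
move=> ha; elim: n => [|n IH]; first by rewrite mul0r addr0 expr0.
rewrite exprS -natr1.
have h1 : 0 <= 1 + a by rewrite addr_ge0.
have := ler_wpM2l h1 IH.
have : 0 <= n%:R * a * a by rewrite mulr_ge0 ?mulr_ge0.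
move=> h2 h3; apply: le_trans h3; nra.
Qed.

Lemma geom_small (c e : R) : 0 <= c -> c < 1 -> 0 < e -> exists N, c ^+ N < e.
Proof.
move=> c0 c1 e0.
have [->|cn0] := eqVneq c 0; first by exists 1%N; rewrite expr1.
have cp : 0 < c by rewrite lt_def cn0 c0.
set a := c^-1 - 1.
have ha : 0 < a by rewrite subr_gt0 invf_gt1.
set N := Num.bound (e^-1 / a).
have ei0 : 0 < e^-1 by rewrite invr_gt0.
have hN := @archi_boundP R (e^-1 / a) (ltW (divr_gt0 ei0 ha)).
exists N.
have hb := bernoulli a N (ltW ha).
have e1 : 1 + a = c^-1 by rewrite /a; ring.
rewrite e1 exprVn in hb.
have : e^-1 < (c ^+ N)^-1.
  apply: lt_le_trans hb; rewrite -(ltr_pM2r ha) in hN.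
  rewrite mulrAC -mulrA divff ?mulr1 in hN; last by rewrite gt_eqF.
  by apply: (lt_trans hN); rewrite ltrDr.
rewrite ltf_pV2 ?posrE ?exprn_gt0 //.
Qed.

Lemma contract b t : 0 <= t -> t < 1 -> absv (b - 1) <= t ->
  absv (b ^+ p - 1) <= t * Num.max (p%:R^-1) t.
Proof.
move=> t0 t1 hb.
have eb : b = (b - 1) + 1 by ring.
rewrite eb exprD1n big_ord_recl expr0 bin0 mulr1n addrAC subrr add0r.
set d := b - 1.
have hc : 0 <= t * Num.max (p%:R^-1) t by rewrite mulr_ge0 // le_max t0 orbT.
apply: avsum => // i.
rewrite -mulr_natr avM avX lift0.
have hd0 := avge0 d.
have hd1 : absv d <= 1 by apply: (le_trans hb); exact: ltW.
have hdk : absv d ^+ i.+1 <= t.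
  apply: (le_trans _ hb).
  rewrite exprS; apply: ler_piMr; first exact: avge0.
  exact: exprn_ile1.
have [ip|ip] := ltnP i.+1 p.
  have hC : absv ('C(p, i.+1)%:R) <= p%:R^-1.
    apply: avnat_dvd; first by rewrite bin_gt0 ltnW.
    by apply: prime_dvd_bin => //; rewrite ip.
  apply: le_trans (ler_pM (exprn_ge0 _ (avge0 _)) (avge0 _) hdk hC) _.
  by apply: ler_wpM2l => //; rewrite le_max lexx.
have ei : i.+1 = p.
  by apply/eqP; rewrite eqn_leq ip andbT; have := ltn_ord i.
rewrite ei binn av1 mulr1.
have h2 : absv d ^+ p <= absv d ^+ 2 by apply: ler_wiXn2l => //; exact: p_gt1.
apply: (le_trans h2); rewrite expr2.
apply: le_trans (ler_pM hd0 hd0 hb hb) _.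
by apply: ler_wpM2l => //; rewrite le_max lexx orbT.
Qed.

Lemma iter_bound a : absv (a - 1) < 1 -> forall N,
  absv (a ^+ (p ^ N) - 1) <= absv (a - 1) * Num.max (p%:R^-1) (absv (a - 1)) ^+ N.
Proof.
move=> ha; set d := absv (a - 1); set c := Num.max _ _.
have d0 : 0 <= d by exact: avge0.
have c0 : 0 <= c by rewrite le_max d0 orbT.
have dc : d <= c by rewrite le_max lexx orbT.
have c1 : c <= 1.
  rewrite ge_max (ltW ha) andbT invf_le1 ?pR_gt0 //; exact: ltW pR_gt1.
elim=> [|N IH]; first by rewrite expn0 expr1 expr0 mulr1.
rewrite expnSr exprM.
set t := d * c ^+ N.
have t0 : 0 <= t by rewrite mulr_ge0 // exprn_ge0.
have td : t <= d by rewrite /t; apply: ler_piMr => //; exact: exprn_ile1.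
have t1 : t < 1 by apply: le_lt_trans td ha.
apply: le_trans (contract _ _ t0 t1 IH) _.
rewrite exprSr mulrA -/t; apply: ler_wpM2l => //.
by rewrite ge_max le_max lexx (le_trans td dc).
Qed.

Lemma powp_small a e : absv (a - 1) < 1 -> 0 < e ->
  exists N0, forall N, (N0 <= N)%N -> absv (a ^+ (p ^ N) - 1) < e.
Proof.
move=> ha e0; set d := absv (a - 1); set c := Num.max (p%:R^-1) d.
have d0 : 0 <= d by exact: avge0.
have c0 : 0 <= c by rewrite le_max d0 orbT.
have c1 : c < 1.
  rewrite gt_max ha andbT invf_lt1 ?pR_gt0 //; exact: pR_gt1.
have [N0 hN0] := geom_small c e c0 c1 e0.
exists N0 => N hN.
apply: le_lt_trans (iter_bound _ ha N) _.
apply: le_lt_trans hN0.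
apply: le_trans (ler_wiXn2l c0 (ltW c1) hN).
by apply: ler_piMl; [exact: exprn_ge0 | exact: ltW].
Qed.

Lemma cvg_uniq u a b : cvg_to absv u a -> cvg_to absv u b -> a = b.
Proof.
move=> ha hb; apply/eqP; rewrite -subr_eq0; apply/eqP; apply/av0; apply/eqP; rewrite eq_le avge0 andbT.
apply/ler_addgt0Pr => e e0; rewrite add0r.
have [N1 h1] := ha e e0; have [N2 h2] := hb e e0.
have e1 : a - b = (u (maxn N1 N2) - b) - (u (maxn N1 N2) - a) by ring.
rewrite e1; apply: ltW; apply: avDlt; first by apply: h2; rewrite leq_maxr.
by rewrite avN; apply: h1; rewrite leq_maxl.
Qed.

Lemma plimE u l : cvg_to absv u l -> plim absv u = l.
Proof.
move=> h; rewrite /plim; apply: xget_unique => // y hy.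
exact: cvg_uniq hy h.
Qed.

Lemma cvg_cst c : cvg_to absv (fun _ => c) c.
Proof. by move=> e e0; exists 0%N => m _; rewrite subrr av00. Qed.

Lemma cvgD u v a b : cvg_to absv u a -> cvg_to absv v b ->
  cvg_to absv (fun n => u n + v n) (a + b).
Proof.
move=> ha hb e e0; have [N1 h1] := ha e e0; have [N2 h2] := hb e e0.
exists (maxn N1 N2) => m hm.
have -> : u m + v m - (a + b) = (u m - a) + (v m - b) by ring.
apply: avDlt; [apply: h1 | apply: h2]; apply: leq_trans hm;
  [exact: leq_maxl | exact: leq_maxr].
Qed.

Lemma cvgZ c u a : cvg_to absv u a -> cvg_to absv (fun n => c * u n) (c * a).
Proof.
move=> ha e e0.
set k := absv c + 1.
have k0 : 0 < k by rewrite /k ltr_wpDl ?avge0 ?ltr01.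
have [N h] := ha (e / k) (divr_gt0 e0 k0).
exists N => m hm; rewrite -mulrBr avM.
apply: le_lt_trans (_ : absv c * absv (u m - a) <= k * absv (u m - a)) _.
  by apply: ler_wpM2r; [exact: avge0 | rewrite /k lerDl ler01].
have hu := h m hm.
have : k * absv (u m - a) < k * (e / k) by rewrite ltr_pM2l.
by rewrite mulrCA divff ?mulr1 // gt_eqF.
Qed.

Lemma cvg_sum (I : Type) (s : seq I) (U : I -> nat -> K) (A : I -> K) :
  (forall i, cvg_to absv (U i) (A i)) ->
  cvg_to absv (fun n => \sum_(i <- s) U i n) (\sum_(i <- s) A i).
Proof.
move=> h; elim: s => [|i s IH].
  rewrite big_nil.
  have -> : (fun n => \sum_(i <- [::]) U i n) = (fun _ => 0).
    by apply: funext => n; rewrite big_nil.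
  exact: cvg_cst.
rewrite big_cons.
have -> : (fun n => \sum_(j <- i :: s) U j n) = (fun n => U i n + \sum_(j <- s) U j n).
  by apply: funext => n; rewrite big_cons.
exact: cvgD.
Qed.
Lemma cvg_powp a : absv (a - 1) < 1 -> cvg_to absv (fun N => a ^+ (p ^ N)) 1.
Proof. by move=> ha e e0; have [N h] := powp_small a e ha e0; exists N. Qed.

Lemma podd_pow N : odd (p ^ N).
Proof. by rewrite oddX Hpodd orbT. Qed.

Lemma altsum (a : K) n : odd n -> (1 + a) * \sum_(0 <= y < n) (- a) ^+ y = 1 + a ^+ n.
Proof.
move=> hn; rewrite big_mkord.
have := subrX1 (- a) n; rewrite exprNn.
rewrite -(@signr_odd K n) hn expr1 => h.
have e : 1 + a = - (- a - 1) by ring.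
by rewrite e mulNr -h; ring.
Qed.

Lemma fint_exp (I : Type) (s : seq I) (c a : I -> K) :
  (forall i, absv (a i - 1) < 1) ->
  fint absv p (fun y => \sum_(i <- s) c i * a i ^+ y) =
  \sum_(i <- s) c i * (2%:R / (1 + a i)).
Proof.
move=> ha; rewrite /fint; apply: plimE.
have -> : (fun N => \sum_(0 <= y < p ^ N) (\sum_(i <- s) c i * a i ^+ y) * (-1) ^+ y) =
   (fun N => \sum_(i <- s) (c i / (1 + a i)) * (1 + a i ^+ (p ^ N))).
  apply: funext => N.
  under eq_bigr do rewrite big_distrl /=.
  rewrite exchange_big /=; apply: eq_bigr => i _.
  have hz : 1 + a i != 0.
    by apply/eqP => h0; have := avunitD1 _ (ha i); rewrite h0 av00 => /eqP; rewrite eq_sym oner_eq0.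
  rewrite -(altsum (a i) _ (podd_pow N)) mulrA divfK // big_distrr /=.
  apply: eq_bigr => y _; rewrite -mulrA; congr (_ * _).
  by rewrite [RHS]exprNn; exact: mulrC.
apply: cvg_sum => i.
have -> : c i * (2%:R / (1 + a i)) = c i / (1 + a i) * (1 + 1).
  by rewrite -natr1 mulrA mulrAC; congr (_ * _); rewrite add1n.
apply: cvgZ; apply: cvgD; [exact: cvg_cst | exact: cvg_powp].
Qed.

Definition expo (r : nat) {I : Type} (s : seq I) (c : I -> K) (al : I -> nat -> K)
  : seq nat -> K :=
  fun ys => \sum_(i <- s) c i * \prod_(l < r) al i l ^+ nth 0%N ys l.

Definition fval (r : nat) {I : Type} (s : seq I) (c : I -> K) (al : I -> nat -> K) : K :=
  \sum_(i <- s) c i * \prod_(l < r) (2%:R / (1 + al i l)).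

Lemma mint_expo r : forall (I : Type) (s : seq I) c al,
  (forall i l, absv (al i l - 1) < 1) ->
  mint absv p r (expo r s c al) = fval r s c al.
Proof.
elim: r => [|r IH] I s c al hal.
  by rewrite /= /expo /fval; apply: eq_bigr => i _; rewrite !big_ord0.
rewrite /=.
have e : forall y, (fun ys => expo r.+1 s c al (y :: ys)) =
   expo r s (fun i => c i * al i 0%N ^+ y) (fun i l => al i l.+1).
  move=> y; apply: funext => ys; rewrite /expo; apply: eq_bigr => i _.
  by rewrite big_ord_recl /= mulrA.
under eq_fun do rewrite e IH //.
rewrite /fval.
have -> : (fun y => \sum_(i <- s) c i * al i 0%N ^+ y * \prod_(l < r) (2%:R / (1 + al i l.+1)))
  = (fun y => \sum_(i <- s) (c i * \prod_(l < r) (2%:R / (1 + al i l.+1))) * al i 0%N ^+ y).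
  by apply: funext => y; apply: eq_bigr => i _; rewrite mulrAC.
rewrite fint_exp //; apply: eq_bigr => i _.
rewrite (big_ord_recl r) -mulrA [X in _ * X = _]mulrC; congr (_ * (_ * _)); apply: eq_bigr => l _; by rewrite lift0.
Qed.

Definition integrable (r : nat) (F : seq nat -> K) : Prop :=
  exists (I : Type) (s : seq I) c al,
    (forall i l, absv (al i l - 1) < 1) /\ F =1 expo r s c al.

Lemma mint_ext {r} {F G : seq nat -> K} : F =1 G -> mint absv p r F = mint absv p r G.
Proof. by move=> h; rewrite (funext h). Qed.

Lemma integ0 r : integrable r (fun _ => 0) /\ mint absv p r (fun _ => 0) = 0.
Proof.
have h : (fun _ : seq nat => (0 : K)) =1 expo r (Nil unit) (fun _ => 0) (fun _ _ => 1).
  by move=> ys; rewrite /expo big_nil.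
split; first by exists unit, [::], (fun _ => 0), (fun _ _ => 1); split => // i l; rewrite subrr av00 ltr01.
rewrite (mint_ext h) mint_expo; first by rewrite /fval big_nil.
by move=> i l; rewrite subrr av00 ltr01.
Qed.

Lemma integD {r} {F G : seq nat -> K} : integrable r F -> integrable r G ->
  integrable r (fun ys => F ys + G ys) /\
  mint absv p r (fun ys => F ys + G ys) = mint absv p r F + mint absv p r G.
Proof.
move=> [I1 [s1 [c1 [a1 [h1 e1]]]]] [I2 [s2 [c2 [a2 [h2 e2]]]]].
pose s := map inl s1 ++ map inr s2 : seq (I1 + I2).
pose c := fun i : I1 + I2 => match i with inl x => c1 x | inr x => c2 x end.
pose a := fun i : I1 + I2 => match i with inl x => a1 x | inr x => a2 x end.
have ha : forall i l, absv (a i l - 1) < 1 by case.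
have e : (fun ys => F ys + G ys) =1 expo r s c a.
  by move=> ys; rewrite e1 e2 /expo big_cat !big_map.
split; first by exists (I1 + I2)%type, s, c, a.
rewrite (mint_ext e) (mint_ext e1) (mint_ext e2) !mint_expo //.
by rewrite /fval big_cat !big_map.
Qed.

Lemma integZ {r} (k : K) {F : seq nat -> K} : integrable r F ->
  integrable r (fun ys => k * F ys) /\
  mint absv p r (fun ys => k * F ys) = k * mint absv p r F.
Proof.
move=> [I [s [c [a [h e]]]]].
have e' : (fun ys => k * F ys) =1 expo r s (fun i => k * c i) a.
  by move=> ys; rewrite e /expo mulr_sumr; apply: eq_bigr => i _; rewrite mulrA.
split; first by exists I, s, (fun i => k * c i), a.
rewrite (mint_ext e') (mint_ext e) !mint_expo // /fval mulr_sumr.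
by apply: eq_bigr => i _; rewrite mulrA.
Qed.

Lemma integ_sum r (J : Type) (t : seq J) (H : J -> seq nat -> K) :
  (forall j, integrable r (H j)) ->
  integrable r (fun ys => \sum_(j <- t) H j ys) /\
  mint absv p r (fun ys => \sum_(j <- t) H j ys) = \sum_(j <- t) mint absv p r (H j).
Proof.
move=> hH; elim: t => [|j t [IH1 IH2]].
  have e : (fun ys => \sum_(j <- [::]) H j ys) =1 (fun _ => 0) by move=> ys; rewrite big_nil.
  split; last by rewrite (mint_ext e) big_nil; exact: (integ0 r).2.
  exists unit, [::], (fun _ => 0), (fun _ _ => 1); split.
    by move=> i l; rewrite subrr av00 ltr01.
  by move=> ys; rewrite /expo !big_nil.
have e : (fun ys => \sum_(i <- j :: t) H i ys) =1 (fun ys => H j ys + \sum_(i <- t) H i ys).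
  by move=> ys; rewrite big_cons.
have [i1 m1] := integD (hH j) IH1.
rewrite (mint_ext e) m1 IH2 big_cons; split => //.
move: i1 => [I [s [c [a [h e0]]]]]; exists I, s, c, a; split => // ys; rewrite -e0; exact: e.
Qed.

Lemma prodM r (F G : 'I_r -> K) :
  \prod_(l < r) (F l * G l) = \prod_(l < r) F l * \prod_(l < r) G l.
Proof. exact: big_split. Qed.

Lemma prod_sum_ffun r w (f : 'I_r -> 'I_w -> K) :
  \prod_(l < r) \sum_(j < w) f l j = \sum_(k : {ffun 'I_r -> 'I_w}) \prod_(l < r) f l (k l).
Proof. exact: bigA_distr_bigA. Qed.

Lemma prodXM r (be ga : nat -> K) (ys : seq nat) k :
  \prod_(l < r) (be l * ga l ^+ k) ^+ nth 0%N ys l =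
  \prod_(l < r) be l ^+ nth 0%N ys l * (\prod_(l < r) ga l ^+ nth 0%N ys l) ^+ k.
Proof.
rewrite -prodrXl -big_split /=; apply: eq_bigr => l _.
by rewrite exprMn exprAC.
Qed.

Lemma integ_shape r (be ga : nat -> K) (a b : K) m :
  (forall l, absv (be l - 1) < 1) -> (forall l, absv (ga l - 1) < 1) ->
  integrable r (fun ys => \prod_(l < r) be l ^+ nth 0%N ys l *
                 (a + b * \prod_(l < r) ga l ^+ nth 0%N ys l) ^+ m).
Proof.
move=> hbe hga.
exists 'I_m.+1, (index_enum 'I_m.+1),
  (fun k : 'I_m.+1 => a ^+ (m - k) * b ^+ k *+ 'C(m, k)),
  (fun (k : 'I_m.+1) l => be l * ga l ^+ k); split.
  by move=> k l; apply: avunitM => //; apply: avunitX.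
move=> ys; rewrite /expo exprDn mulr_sumr; apply: eq_bigr => k _.
rewrite prodXM; set P := \prod_(l < r) be l ^+ _; set G := \prod_(l < r) ga l ^+ _.
rewrite mulrnAr mulrnAl exprMn; congr (_ *+ _); ring.
Qed.

Definition sh {r : nat} (w : nat) (k : {ffun 'I_r -> 'I_w}) (u : seq nat) : seq nat :=
  [seq (k l : nat) + w * nth 0%N u l | l <- enum 'I_r].

Lemma nth_sh r w (k : {ffun 'I_r -> 'I_w}) u (l : 'I_r) : nth 0%N (sh w k u) l = (k l + w * nth 0%N u l)%N.
Proof.
rewrite /sh (nth_map l) ?size_enum_ord ?ltn_ord //.
by rewrite nth_ord_enum.
Qed.

Lemma unit_neq0' a : absv (a - 1) < 1 -> 1 + a != 0.
Proof.
by move=> h; apply/eqP => h0; have := avunitD1 _ h; rewrite h0 av00 => /eqP; rewrite eq_sym oner_eq0.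
Qed.

Lemma mint_dist r w F : odd w -> integrable r F ->
  mint absv p r F = \sum_(k : {ffun 'I_r -> 'I_w})
     (-1) ^+ (\sum_(l < r) (k l : nat)) * mint absv p r (fun u => F (sh w k u)).
Proof.
move=> hw [I [s [c [a [ha e]]]]].
have ek : forall k : {ffun 'I_r -> 'I_w}, (fun u => F (sh w k u)) =1
   expo r s (fun i => c i * \prod_(l < r) a i l ^+ k l) (fun i l => a i l ^+ w).
  move=> k u; rewrite e /expo; apply: eq_bigr => i _.
  rewrite -mulrA; congr (_ * _); rewrite -big_split /=; apply: eq_bigr => l _.
  by rewrite nth_sh exprD exprM.
have haw : forall i l, absv (a i l ^+ w - 1) < 1 by move=> i l; apply: avunitX.
rewrite (mint_ext e) mint_expo //.
under eq_bigr do rewrite (mint_ext (ek _)) mint_expo // /fval mulr_sumr.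
rewrite exchange_big /fval; apply: eq_bigr => i _.
have -> : \sum_(k : {ffun 'I_r -> 'I_w}) (-1) ^+ (\sum_(l < r) (k l : nat)) *
    (c i * \prod_(l < r) a i l ^+ k l * \prod_(l < r) (2%:R / (1 + a i l ^+ w)))
  = c i * \sum_(k : {ffun 'I_r -> 'I_w}) \prod_(l < r)
      ((- a i l) ^+ k l * (2%:R / (1 + a i l ^+ w))).
  rewrite mulr_sumr; apply: eq_bigr => k _.
  have hN : \prod_(l < r) (- a i l) ^+ k l =
      (-1) ^+ (\sum_(l < r) (k l : nat)) * \prod_(l < r) a i l ^+ k l.
    rewrite expr_sum -big_split /=; apply: eq_bigr => l _; exact: exprNn.
  rewrite [in RHS]prodM hN; ring.
rewrite -(@prod_sum_ffun r w (fun (l : 'I_r) (j : 'I_w) => (- a i l) ^+ j * (2%:R / (1 + a i l ^+ w)))).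
congr (_ * _); apply: eq_bigr => l _.
have h1 := unit_neq0' _ (ha i l).
have h2 := unit_neq0' _ (haw i l).
rewrite -mulr_suml.
have := altsum (a i l) _ hw; rewrite big_mkord => h.
have -> : \sum_(j < w) (- a i l) ^+ j = (1 + a i l ^+ w) / (1 + a i l).
  by rewrite -h [(1 + _) * _]mulrC mulfK.
by field; rewrite h1 h2.
Qed.


Lemma mod_coh x : is_Zp p x -> forall k d, (x (k + d) %% p ^ k)%N = x k.
Proof.
move=> hx k; elim=> [|d IH]; first by rewrite addn0 modn_small //; case: (hx k).
rewrite addnS; have [_ h] := hx (k + d).
rewrite -(modn_dvdm _ (dvdn_exp2l p (leq_addr d k))) h; exact: IH.
Qed.

Lemma cong_close (q : K) a b N : absv (q - 1) < 1 -> (a %% p ^ N = b %% p ^ N)%N ->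
  absv (q ^+ a - q ^+ b) <= absv (q ^+ (p ^ N) - 1).
Proof.
move=> hq hab.
rewrite (divn_eq a (p ^ N)%N) (divn_eq b (p ^ N)%N) hab !exprD !(mulnC _ (p ^ N)%N) !exprM.
set Q := q ^+ (p ^ N); set r := q ^+ _.
have e : Q ^+ (a %/ p ^ N) * r - Q ^+ (b %/ p ^ N) * r =
   r * ((Q ^+ (a %/ p ^ N) - 1) - (Q ^+ (b %/ p ^ N) - 1)) by ring.
have hQ : absv Q <= 1 by rewrite /Q avX avunit // expr1n.
rewrite e avM /r avX avunit // expr1n mul1r; apply: avDle.
  exact: avXn_le.
by rewrite avN; exact: avXn_le.
Qed.

Lemma zp_limit (q : K) x : absv (q - 1) < 1 -> is_Zp p x ->
  exists X, cvg_to absv (fun N => q ^+ x N) X.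
Proof.
move=> hq hx; apply: avcomplete => e e0.
have [N0 h0] := powp_small q e hq e0.
exists N0 => m k hm hk.
set M := minn m k.
have hmM : (M <= m)%N by exact: geq_minl.
have hkM : (M <= k)%N by exact: geq_minr.
apply: le_lt_trans (cong_close q (x m) (x k) M hq _) _.
  by rewrite -(subnKC hmM) -(subnKC hkM) !mod_coh.
by apply: h0; rewrite leq_min hm hk.
Qed.

Lemma powdiff (a b : K) n : absv a <= 1 -> absv b <= 1 -> absv (a ^+ n - b ^+ n) <= absv (a - b).
Proof.
move=> ha hb; rewrite subrXX avM; apply: ler_piMr; first exact: avge0.
apply: avsum => // i; rewrite avM; apply: (le_trans (ler_wpM2l (avge0 _) (avexpr_le1 _ _ hb))).
by rewrite mulr1; apply: avexpr_le1.
Qed.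

Lemma lim_le1 (u : nat -> K) X : (forall N, absv (u N) <= 1) -> cvg_to absv u X -> absv X <= 1.
Proof.
move=> hu hX; have [N h] := hX 1 ltr01.
have e : X = u N - (u N - X) by ring.
by rewrite e; apply: avDle => //; rewrite avN; apply: ltW; apply: h.
Qed.

Lemma qpow_lim (q X : K) x (w1 w2 m : nat) : absv (q - 1) < 1 ->
  cvg_to absv (fun N => q ^+ x N) X ->
  qpowZp absv (q ^+ w1) (zp_addn p (zp_muln p w2 x) m) = (q ^+ w1) ^+ m * X ^+ (w1 * w2).
Proof.
move=> hq hX; rewrite /qpowZp; apply: plimE => e e0.
set Q := q ^+ w1.
have hQ : absv (Q - 1) < 1 by exact: avunitX.
have hq1 : forall N, absv (q ^+ x N) <= 1 by move=> N; rewrite avX avunit // expr1n.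
have hX1 := lim_le1 _ _ hq1 hX.
have [N1 h1] := powp_small Q e hQ e0.
have [N2 h2] := hX e e0.
exists (maxn N1 N2) => N hN.
rewrite /zp_addn /zp_muln.
have e1 : Q ^+ (((w2 * x N) %% p ^ N + m) %% p ^ N)%N - Q ^+ m * X ^+ (w1 * w2)%N =
   (Q ^+ (((w2 * x N) %% p ^ N + m) %% p ^ N)%N - Q ^+ (w2 * x N + m)%N) +
   Q ^+ m * ((q ^+ x N) ^+ (w1 * w2)%N - X ^+ (w1 * w2)%N).
  have eQ : Q ^+ (w2 * x N + m)%N = Q ^+ m * (q ^+ x N) ^+ (w1 * w2)%N.
    rewrite exprD mulrC /Q -!exprM; congr (_ * _); congr (_ ^+ _).
    by rewrite mulnA mulnC.
  rewrite eQ; ring.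
rewrite e1; apply: avDlt.
  apply: le_lt_trans (cong_close Q _ _ N hQ _) _.
    by rewrite modn_mod modnDml.
  by apply: h1; apply: leq_trans hN; exact: leq_maxl.
rewrite avM avX avunit // expr1n mul1r.
apply: le_lt_trans (powdiff _ _ _ (hq1 N) hX1) _.
by apply: h2; apply: leq_trans hN; exact: leq_maxr.
Qed.

Lemma avunit_zpow (z : K) (a : int) : absv (z - 1) < 1 -> absv (z ^ a - 1) < 1.
Proof.
move=> hz; case: a => n; first exact: avunitX.
by apply: avunitV; apply: avunitX.
Qed.

Lemma zpow_sum (z : K) r (F : 'I_r -> int) (N : 'I_r -> nat) : z != 0 ->
  z ^ (\sum_(l < r) F l * (N l)%:Z) = \prod_(l < r) (z ^ F l) ^+ N l.
Proof.
move=> z0; elim/big_rec2: _ => [|i a b _ <-]; first by rewrite expr0z.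
by rewrite expfzDr // -exprz_exp.
Qed.

Lemma zpowXA (z : K) (w : nat) (a : int) : (z ^+ w) ^ a = (z ^ a) ^+ w.
Proof.
rewrite -[z ^+ w]/(z ^ (w%:Z)) -[(z ^ a) ^+ w]/((z ^ a) ^ (w%:Z)) !exprz_exp.
by rewrite mulrC.
Qed.

Section Main.
Variables (q : K) (h : int) (r n : nat).
Hypothesis hq : absv (q - 1) < 1.

Definition del (l : nat) : K := q ^ (h - (l.+1)%:Z).
Definition Bq (Y : K) (s : nat) : K := (1 - q ^+ s * Y) / (1 - q).
Definition Ssum (ys : seq nat) : nat := (\sum_(l < r) nth 0%N ys l)%N.
Definition jsum {w} (j : {ffun 'I_r -> 'I_w}) : nat := (\sum_(l < r) (j l : nat))%N.

Lemma del_unit l : absv (del l - 1) < 1.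
Proof. exact: avunit_zpow. Qed.

Lemma q_neq0 : q != 0.
Proof. exact: avunit_neq0. Qed.

Lemma integ_B (be : nat -> K) (Y : K) (c t m : nat) :
  (forall l, absv (be l - 1) < 1) ->
  integrable r (fun ys => \prod_(l < r) be l ^+ nth 0%N ys l * Bq Y (c + t * Ssum ys) ^+ m).
Proof.
move=> hbe.
have [I [s [cc [a [ha e]]]]] := integ_shape r be (fun _ => q ^+ t) ((1 - q)^-1)
   (- (q ^+ c * Y) / (1 - q)) m hbe (fun _ => avunitX _ _ hq).
exists I, s, cc, a; split => // ys; rewrite -e.
congr (_ * _ ^+ _); rewrite /Bq /Ssum exprD exprM prodrXr; ring.
Qed.

Lemma E_eval (x : nat -> nat) w1 w2 Y m :
  (forall mm, qpowZp absv (q ^+ w1) (zp_addn p (zp_muln p w2 x) mm) = (q ^+ w1) ^+ mm * Y) ->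
  Eqhr absv p m (q ^+ w1) h r (zp_muln p w2 x) =
  mint absv p r (fun ys => \prod_(l < r) (del l ^+ w1) ^+ nth 0%N ys l *
      ((1 - (q ^+ w1) ^+ (Ssum ys) * Y) / (1 - q ^+ w1)) ^+ m).
Proof.
move=> hY; rewrite /Eqhr; apply: mint_ext => ys; rewrite /qnumZp hY.
rewrite (zpow_sum _ r (fun l : 'I_r => h - (l.+1)%:Z) (fun l : 'I_r => nth 0%N ys l)); last first.
  by rewrite expf_neq0 // q_neq0.
congr (_ * _); apply: eq_bigr => l _; by rewrite zpowXA.
Qed.

Lemma T_eval w1 w2 i : (i <= n)%N ->
  Tqhr n i (q ^+ w2) h r w1 =
  \sum_(j : {ffun 'I_r -> 'I_w1}) (-1) ^+ (jsum j) *
     \prod_(l < r) (del l ^+ w2) ^+ j l * ((q ^+ w2) ^+ (jsum j)) ^+ (n - i) *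
     qnum (q ^+ w2) (jsum j) ^+ i.
Proof.
move=> hi; rewrite /Tqhr; apply: eq_bigr => j _; congr (_ * _).
have z0 : q ^+ w2 != 0 by rewrite expf_neq0 // q_neq0.
have e : \sum_(l < r) (n%:Z + h - (l.+1)%:Z - i%:Z) * (j l : nat)%:Z =
   \sum_(l < r) (h - (l.+1)%:Z) * (j l : nat)%:Z + ((n - i) * jsum j)%N%:Z.
  rewrite /jsum PoszM -subzn // (big_morph Posz PoszD (erefl _)) mulr_sumr -big_split /=.
  by apply: eq_bigr => l _; ring.
rewrite e expfzDr // (zpow_sum _ r (fun l : 'I_r => h - (l.+1)%:Z) (fun l : 'I_r => (j l : nat))) //.
rewrite -[_ ^ ((n - i) * jsum j)%N%:Z]/(_ ^+ ((n - i) * jsum j)%N) mulnC exprM -!mulrA.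
congr (_ * _); congr (_ * _); apply: eq_bigr => l _; by rewrite zpowXA.
Qed.

Definition Phi (v : nat) (Y : K) (c : nat) : seq nat -> K :=
  fun u => \prod_(l < r) del l ^+ (v * nth 0%N u l) * Bq Y (c + v * Ssum u) ^+ n.

Definition Sym w1 w2 Y : K :=
  \sum_(j : {ffun 'I_r -> 'I_w1}) \sum_(k : {ffun 'I_r -> 'I_w2})
     (-1) ^+ (jsum j + jsum k) * \prod_(l < r) del l ^+ (w2 * j l + w1 * k l) *
     mint absv p r (Phi (w1 * w2) Y (w2 * jsum j + w1 * jsum k)).

Lemma Sym_sym w1 w2 Y : Sym w1 w2 Y = Sym w2 w1 Y.
Proof.
rewrite /Sym exchange_big; apply: eq_bigr => k _; apply: eq_bigr => j _.
rewrite addnC mulnC [(w1 * jsum k + _)%N]addnC; congr (_ * _ * _).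
by apply: eq_bigr => l _; rewrite addnC.
Qed.

Lemma integ_Phi v Y c : integrable r (Phi v Y c).
Proof.
have [I [s [cc [a [ha e]]]]] := integ_B (fun l => del l ^+ v) Y c v n
  (fun l => avunitX _ _ (del_unit l)).
exists I, s, cc, a; split => // u; rewrite -e /Phi; congr (_ * _).
by apply: eq_bigr => l _; rewrite exprM.
Qed.

Lemma Ssum_sh w (k : {ffun 'I_r -> 'I_w}) u : Ssum (sh w k u) = (jsum k + w * Ssum u)%N.
Proof.
rewrite /Ssum /jsum big_distrr /= -big_split /=; apply: eq_bigr => l _.
by rewrite nth_sh.
Qed.

Lemma step2 w1 w2 Y (c : nat) : odd w2 ->
  mint absv p r (fun ys => \prod_(l < r) (del l ^+ w1) ^+ nth 0%N ys l *
                   Bq Y (c + w1 * Ssum ys) ^+ n) =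
  \sum_(k : {ffun 'I_r -> 'I_w2}) (-1) ^+ (jsum k) *
     \prod_(l < r) del l ^+ (w1 * k l) * mint absv p r (Phi (w1 * w2) Y (c + w1 * jsum k)).
Proof.
move=> hw2.
rewrite (mint_dist r w2 _ hw2); last first.
  by apply: (integ_B (fun l => del l ^+ w1) Y c w1 n) => l; apply: avunitX; exact: del_unit.
apply: eq_bigr => k _; rewrite -mulrA; congr (_ * _).
rewrite -(integZ _ (integ_Phi _ _ _)).2; apply: mint_ext => u.
rewrite /Phi Ssum_sh mulrA; congr (_ * _ ^+ _).
  rewrite -prodM; apply: eq_bigr => l _.
  by rewrite nth_sh -!exprM -exprD mulnDr mulnA.
by congr (Bq _ _); rewrite mulnDr addnA mulnA.
Qed.

Definition Hb w1 Y (m : nat) : seq nat -> K :=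
  fun ys => \prod_(l < r) (del l ^+ w1) ^+ nth 0%N ys l * Bq Y (0 + w1 * Ssum ys) ^+ m.

Lemma integ_Hb w1 Y m : integrable r (Hb w1 Y m).
Proof. by apply: (integ_B (fun l => del l ^+ w1) Y 0 w1 m) => l; apply: avunitX; exact: del_unit. Qed.

Lemma E_Hb x w1 w2 Y m : q ^+ w1 != 1 ->
  (forall mm, qpowZp absv (q ^+ w1) (zp_addn p (zp_muln p w2 x) mm) = (q ^+ w1) ^+ mm * Y) ->
  qnum q w1 ^+ m * Eqhr absv p m (q ^+ w1) h r (zp_muln p w2 x) = mint absv p r (Hb w1 Y m).
Proof.
move=> hw1 hY.
have q1 : 1 - q != 0.
  apply: contra hw1; rewrite subr_eq0 => /eqP <-; by rewrite expr1n.
have Q1 : 1 - q ^+ w1 != 0 by rewrite subr_eq0 eq_sym.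
rewrite (E_eval x w1 w2 Y m hY).
have e : (fun ys => \prod_(l < r) (del l ^+ w1) ^+ nth 0%N ys l *
      ((1 - (q ^+ w1) ^+ (Ssum ys) * Y) / (1 - q ^+ w1)) ^+ m) =1
   (fun ys => ((1 - q) / (1 - q ^+ w1)) ^+ m * Hb w1 Y m ys).
  move=> ys; rewrite /Hb /Bq add0n mulrCA -exprMn; congr (_ * _ ^+ _).
  by rewrite -exprM; field; rewrite q1 Q1.
rewrite (mint_ext e) (integZ _ (integ_Hb w1 Y m)).2 mulrA -exprMn /qnum.
by rewrite [X in X ^+ m](_ : _ = 1) ?expr1n ?mul1r //; field; rewrite q1 Q1.
Qed.

Lemma Hj_expand w1 w2 Y (J : nat) : q ^+ w2 != 1 ->
  mint absv p r (fun ys => \prod_(l < r) (del l ^+ w1) ^+ nth 0%N ys l *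
                   Bq Y (w2 * J + w1 * Ssum ys) ^+ n) =
  \sum_(i < n.+1) 'C(n, i)%:R * (qnum q w2 * qnum (q ^+ w2) J) ^+ i *
     ((q ^+ w2) ^+ J) ^+ (n - i) * mint absv p r (Hb w1 Y (n - i)).
Proof.
move=> hw2.
have q1 : 1 - q != 0.
  apply: contra hw2; rewrite subr_eq0 => /eqP <-; by rewrite expr1n.
have Q2 : 1 - q ^+ w2 != 0 by rewrite subr_eq0 eq_sym.
set cf := fun i : 'I_n.+1 => 'C(n, i)%:R * (qnum q w2 * qnum (q ^+ w2) J) ^+ i *
     ((q ^+ w2) ^+ J) ^+ (n - i).
have e : (fun ys => \prod_(l < r) (del l ^+ w1) ^+ nth 0%N ys l *
                   Bq Y (w2 * J + w1 * Ssum ys) ^+ n) =1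
    (fun ys => \sum_(i <- index_enum 'I_n.+1) (fun i => fun ys => cf i * Hb w1 Y (n - i) ys) i ys).
  move=> ys /=.
  have eB : Bq Y (w2 * J + w1 * Ssum ys) =
     (q ^+ w2) ^+ J * Bq Y (0 + w1 * Ssum ys) + qnum q w2 * qnum (q ^+ w2) J.
    rewrite /Bq /qnum add0n exprD -exprM; field; by rewrite q1 Q2.
  rewrite eB exprDn mulr_sumr; apply: eq_bigr => i _.
  rewrite /cf /Hb exprMn -mulr_natl; ring.
rewrite (mint_ext e) (integ_sum r _ (index_enum 'I_n.+1)
   (fun i => fun ys => cf i * Hb w1 Y (n - i) ys) _).2; last first.
  by move=> i; exact: (integZ _ (integ_Hb w1 Y (n - i))).1.
apply: eq_bigr => i _; exact: (integZ _ (integ_Hb w1 Y (n - i))).2.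
Qed.

Lemma side x w1 w2 Y : odd w1 -> odd w2 -> q ^+ w1 != 1 -> q ^+ w2 != 1 ->
  (forall mm, qpowZp absv (q ^+ w1) (zp_addn p (zp_muln p w2 x) mm) = (q ^+ w1) ^+ mm * Y) ->
  \sum_(0 <= i < n.+1)
     'C(n, i)%:R * qnum q w2 ^+ i * qnum q w1 ^+ (n - i)
       * Eqhr absv p (n - i) (q ^+ w1) h r (zp_muln p w2 x)
       * Tqhr n i (q ^+ w2) h r w1
  = Sym w1 w2 Y.
Proof.
move=> o1 o2 hw1 hw2 hY.
set P := fun (j : {ffun 'I_r -> 'I_w1}) => \prod_(l < r) (del l ^+ w2) ^+ j l.
transitivity (\sum_(j : {ffun 'I_r -> 'I_w1}) (-1) ^+ (jsum j) * P j *
   mint absv p r (fun ys => \prod_(l < r) (del l ^+ w1) ^+ nth 0%N ys l *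
                   Bq Y (w2 * jsum j + w1 * Ssum ys) ^+ n)).
  under [RHS]eq_bigr do rewrite Hj_expand // mulr_sumr.
  rewrite exchange_big /= big_mkord; apply: eq_bigr => i _.
  have hi : (i <= n)%N by rewrite -ltnS.
  rewrite T_eval // mulr_sumr; apply: eq_bigr => j _.
  have := E_Hb x w1 w2 Y (n - i) hw1 hY => hE.
  rewrite -hE /P (exprMn _ (qnum q w2)); ring.
rewrite /Sym; apply: eq_bigr => j _.
rewrite (step2 w1 w2 Y _ o2) mulr_sumr; apply: eq_bigr => k _.
rewrite exprD /P.
have -> : \prod_(l < r) del l ^+ (w2 * j l + w1 * k l) =
   \prod_(l < r) (del l ^+ w2) ^+ j l * \prod_(l < r) del l ^+ (w1 * k l).
  by rewrite -prodM; apply: eq_bigr => l _; rewrite exprD exprM.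
ring.
Qed.

Lemma main_thm w1 w2 x : odd w1 -> odd w2 -> q ^+ w1 != 1 -> q ^+ w2 != 1 -> is_Zp p x ->
  \sum_(0 <= i < n.+1)
     'C(n, i)%:R * qnum q w2 ^+ i * qnum q w1 ^+ (n - i)
       * Eqhr absv p (n - i) (q ^+ w1) h r (zp_muln p w2 x)
       * Tqhr n i (q ^+ w2) h r w1
  = \sum_(0 <= i < n.+1)
     'C(n, i)%:R * qnum q w1 ^+ i * qnum q w2 ^+ (n - i)
       * Eqhr absv p (n - i) (q ^+ w2) h r (zp_muln p w1 x)
       * Tqhr n i (q ^+ w1) h r w2.
Proof.
move=> o1 o2 h1 h2 hx.
have [X hX] := zp_limit q x hq hx.
rewrite (side x w1 w2 (X ^+ (w1 * w2)) o1 o2 h1 h2); last first.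
  by move=> mm; exact: qpow_lim.
rewrite (side x w2 w1 (X ^+ (w1 * w2)) o2 o1 h2 h1); last first.
  by move=> mm; rewrite mulnC; exact: qpow_lim.
exact: Sym_sym.
Qed.

End Main.

End Analysis.

Theorem theorem4 (R : realType) (K : closedFieldType) (absv : K -> R) (p : nat)
  (Hp : prime p) (Hpodd : odd p) (HK : Cp_like absv p)
  (q : K) (Hq : absv (1 - q) < 1) (h : int) (r n w1 w2 : nat)
  (Hw1 : odd w1) (Hw2 : odd w2)
  (Hqw1 : q ^+ w1 != 1) (Hqw2 : q ^+ w2 != 1)
  (x : nat -> nat) (Hx : is_Zp p x) :
  \sum_(0 <= i < n.+1)
     'C(n, i)%:R * qnum q w2 ^+ i * qnum q w1 ^+ (n - i)
       * Eqhr absv p (n - i) (q ^+ w1) h r (zp_muln p w2 x)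
       * Tqhr n i (q ^+ w2) h r w1
  = \sum_(0 <= i < n.+1)
     'C(n, i)%:R * qnum q w1 ^+ i * qnum q w2 ^+ (n - i)
       * Eqhr absv p (n - i) (q ^+ w2) h r (zp_muln p w1 x)
       * Tqhr n i (q ^+ w1) h r w2.
Proof.
have hq : absv (q - 1) < 1 by rewrite (@avB _ _ _ _ HK).
exact: (@main_thm _ _ _ _ Hp Hpodd HK q h r n hq w1 w2 x Hw1 Hw2 Hqw1 Hqw2 Hx).
Qed.
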